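(* The pseudovariety $\mathsf G$ of all finite groups (in the signature of multiplication, identity and inversion) is strong.
   Context: For a pseudovariety $\mathsf U$ and finite set $A$, $\Omega_A\mathsf U$ is the free pro-$\mathsf U$ algebra on $A$ (for $\mathsf U=\mathsf G$, the free profinite group). A $\mathsf U$-pseudoidentity is $u=v$ with $u,v\in\Omega_B\mathsf U$, $B$ finite; it holds in $T\in\mathsf U$ if both sides agree under every continuous homomorphism $\Omega_B\mathsf U\to T$; $[\![\Sigma]\!]_{\mathsf U}$ is the class of members of $\mathsf U$ satisfying $\Sigma$. Provability: for a set $\Sigma$ of $\mathsf U$-pseudoidentities and finite $A$, $\Sigma_0\subseteq\Omega_A\mathsf U\times\Omega_A\mathsf U$ is the set of pairs $(\mathbf t(\varphi(u),w_1,\dots,w_n),\mathbf t(\varphi(v),w_1,\dots,w_n))$ with $u=v$ or $v=u$ in $\Sigma$ ($u,v\in\Omega_B\mathsf U$), $\varphi:\Omega_B\mathsf U\to\Omega_A\mathsf U$ a continuous homomorphism, $\mathbf t$ a term in the basic operations, $w_i\in\Omega_A\mathsf U$; $\Sigma_{2\alpha+1}$ is the transitive closure of $\Sigma_{2\alpha}$, $\Sigma_{2\alpha+2}$ the topological closure of $\Sigma_{2\alpha+1}$, unions at limit ordinals; $u=v$ is provable from $\Sigma$ if $(u,v)\in\bigcup_\alpha\Sigma_\alpha$. $\mathsf U$ is strong if for every set $\Sigma$ of $\mathsf U$-pseudoidentities, every $\mathsf U$-pseudoidentity valid in $[\![\Sigma]\!]_{\mathsf U}$ is provable from $\Sigma$.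 *)

(* Defs.v *)
From HB Require Import structures.
From mathcomp Require Import all_boot all_fingroup.
From Stdlib Require List.

Set Implicit Arguments.
Unset Strict Implicit.
Unset Printing Implicit Defensive.

Local Open Scope group_scope.

(* The free profinite group Omega_A G on a finite set A, realised as the
   group of A-ary implicit operations on finite groups: families
   w_T : (A -> T) -> T, indexed by all finite groups T, commuting with
   every group homomorphism. *)

Definition grp_hom (T T' : finGroupType) (h : T -> T') : Prop :=
  [/\ forall x y, h (x * y) = h x * h y, h 1 = 1 & forall x, h x^-1 = (h x)^-1].

Definition natural (A : Type) (w : forall T : finGroupType, (A -> T) -> T) : Prop :=
  forall (T T' : finGroupType) (h : T -> T'), grp_hom h ->
    forall f : A -> T, h (w T f) = w T' (fun a => h (f a)).

Record OmegaG (A : finType) := MkOmegaG {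
  om_val : forall T : finGroupType, (A -> T) -> T;
  om_nat : natural om_val }.

Definition om_mul A (u v : OmegaG A) : OmegaG A.
Proof.
refine (@MkOmegaG A (fun T f => om_val u f * om_val v f) _).
move=> T T' h hh f; case: (hh) => hM _ _; by rewrite hM (om_nat u hh) (om_nat v hh).
Defined.

Definition om_one A : OmegaG A.
Proof.
refine (@MkOmegaG A (fun T f => 1) _).
by move=> T T' h [hM h1 hV] f /=.
Defined.

Definition om_inv A (u : OmegaG A) : OmegaG A.
Proof.
refine (@MkOmegaG A (fun T f => (om_val u f)^-1) _).
move=> T T' h hh f; case: (hh) => _ _ hV; by rewrite hV (om_nat u hh).
Defined.

(* Profinite topology: the initial topology for the evaluation maps
   w |-> w_T f (T discrete).  A "probe" is such an evaluation; basic open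
   sets are given by agreement on a finite list of probes. *)

Record probe (A : finType) := Probe { pr_T : finGroupType; pr_f : A -> pr_T }.

Definition ev A (w : OmegaG A) (p : probe A) : pr_T p := om_val w (pr_f p).

Definition agree A (L : list (probe A)) (w w' : OmegaG A) : Prop :=
  forall p, List.In p L -> ev w p = ev w' p.

Definition closureR A (R : OmegaG A -> OmegaG A -> Prop) (x y : OmegaG A) : Prop :=
  forall L : list (probe A), exists x' y', [/\ R x' y', agree L x x' & agree L y y'].

Definition transitiveR A (R : OmegaG A -> OmegaG A -> Prop) : Prop :=
  forall x y z, R x y -> R y z -> R x z.

Definition om_hom B A (phi : OmegaG B -> OmegaG A) : Prop :=
  [/\ forall x y, phi (om_mul x y) = om_mul (phi x) (phi y),
      phi (om_one B) = om_one A
    & forall x, phi (om_inv x) = om_inv (phi x)].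

Definition om_cont B A (phi : OmegaG B -> OmegaG A) : Prop :=
  forall (w : OmegaG B) (p : probe A), exists L : list (probe B),
    forall w', agree L w w' -> ev (phi w') p = ev (phi w) p.

Definition omT_hom B (T : finGroupType) (phi : OmegaG B -> T) : Prop :=
  [/\ forall x y, phi (om_mul x y) = phi x * phi y,
      phi (om_one B) = 1
    & forall x, phi (om_inv x) = (phi x)^-1].

Definition omT_cont B (T : finGroupType) (phi : OmegaG B -> T) : Prop :=
  forall w : OmegaG B, exists L : list (probe B),
    forall w', agree L w w' -> phi w' = phi w.

Record pseudoid := PsId { ps_B : finType; ps_l : OmegaG ps_B; ps_r : OmegaG ps_B }.

Definition holds_in (T : finGroupType) B (u v : OmegaG B) : Prop :=
  forall phi : OmegaG B -> T, omT_hom phi -> omT_cont phi -> phi u = phi v.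

Definition models (T : finGroupType) (Sigma : pseudoid -> Prop) : Prop :=
  forall s, Sigma s -> holds_in T (ps_l s) (ps_r s).

(* terms t(x, w_1, ..., w_n) in the basic operations; the parameters w_i
   are represented as constants of Omega_A G, the hole is x *)
Inductive gterm (A : finType) :=
| tHole
| tConst of OmegaG A
| tMul of gterm A & gterm A
| tOne
| tInv of gterm A.

Fixpoint teval A (t : gterm A) (x : OmegaG A) : OmegaG A :=
  match t with
  | tHole => x
  | tConst w => w
  | tMul t1 t2 => om_mul (teval t1 x) (teval t2 x)
  | tOne => om_one A
  | tInv t1 => om_inv (teval t1 x)
  end.

(* Sigma_0 (together with the trivial pairs (w,w)) *)
Definition sigma0 (Sigma : pseudoid -> Prop) (A : finType) (x y : OmegaG A) : Prop :=
  x = y \/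
  exists (B : finType) (u v : OmegaG B) (phi : OmegaG B -> OmegaG A) (t : gterm A),
    [/\ Sigma (PsId u v) \/ Sigma (PsId v u), om_hom phi, om_cont phi,
        x = teval t (phi u) & y = teval t (phi v)].

(* the union of the transfinite sequence Sigma_alpha, i.e. the least relation
   containing Sigma_0 that is transitive and topologically closed *)
Definition provable (Sigma : pseudoid -> Prop) (A : finType) (u v : OmegaG A) : Prop :=
  forall R : OmegaG A -> OmegaG A -> Prop,
    (forall x y, sigma0 Sigma x y -> R x y) ->
    transitiveR R ->
    (forall x y, closureR R x y -> R x y) ->
    R u v.

Definition G_strong : Prop :=
  forall (Sigma : pseudoid -> Prop) (A : finType) (u v : OmegaG A),
    (forall T : finGroupType, models T Sigma -> holds_in T u v) ->
    provable Sigma u v.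

(* Main.v *)
Require Import Defs.
From mathcomp Require Import all_boot all_fingroup.
From Stdlib Require Import ProofIrrelevance ClassicalEpsilon FunctionalExtensionality List.

Set Implicit Arguments.
Unset Strict Implicit.
Unset Printing Implicit Defensive.
Local Open Scope group_scope.

Definition pb (P : Prop) : bool := if excluded_middle_informative P then true else false.
Lemma pbP (P : Prop) : reflect P (pb P).
Proof. rewrite /pb; case: excluded_middle_informative => h; [exact: ReflectT|exact: ReflectF]. Qed.

Lemma om_ext A (u v : OmegaG A) : om_val u = om_val v -> u = v.
Proof.
case: u => fu hu; case: v => fv hv /= e; subst fv.
by rewrite (proof_irrelevance _ hu hv).
Qed.

Definition gen (A : finType) (a : A) : OmegaG A.
Proof. refine (@MkOmegaG A (fun T f => f a) _). by move=> T T' h hh f. Defined.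

Inductive word (A : Type) := wGen of A | wMul of word A & word A | wOne | wInv of word A.

Fixpoint weval (A : finType) (w : word A) : OmegaG A :=
  match w with
  | wGen a => gen a
  | wMul w1 w2 => om_mul (weval w1) (weval w2)
  | wOne => om_one A
  | wInv w1 => om_inv (weval w1)
  end.

Lemma word_hom (B : finType) (T : finGroupType) (psi : OmegaG B -> T) (w : word B) :
  omT_hom psi -> psi (weval w) = om_val (weval w) (fun b => psi (gen b)).
Proof.
move=> [hM h1 hV]; elim: w => [b|w1 IH1 w2 IH2||w1 IH1] //=.
- by rewrite hM IH1 IH2.
- by rewrite hV IH1.
Qed.

Lemma fst_hom (T1 T2 : finGroupType) : grp_hom (@fst T1 T2).
Proof. by split. Qed.
Lemma snd_hom (T1 T2 : finGroupType) : grp_hom (@snd T1 T2).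
Proof. by split. Qed.

Lemma combine (A : finType) (L : list (probe A)) :
  exists p : probe A, forall w w' : OmegaG A, ev w p = ev w' p -> agree L w w'.
Proof.
elim: L => [|q L [p Hp]].
  by exists (@Probe A {perm unit} (fun _ => 1)) => w w' _ p'.
exists (@Probe A (pr_T q * pr_T p)%type (fun a => (pr_f q a, pr_f p a))) => w w' e r /=.
set F := (fun a => (pr_f q a, pr_f p a)) in e.
have h1 := fun x => om_nat x (@fst_hom (pr_T q) (pr_T p)) F.
have h2 := fun x => om_nat x (@snd_hom (pr_T q) (pr_T p)) F.
rewrite /ev /= in e.
case=> [<-|].
  by rewrite /ev -(h1 w) -(h1 w') e.
apply: Hp; by rewrite /ev -(h2 w) -(h2 w') e.
Qed.
Section Surj.
Variables (A : finType) (P : finGroupType) (f : A -> P).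
Definition Hset : {set P} := [set p | pb (exists w : word A, p = om_val (weval w) f)].
Lemma Hset_group : group_set Hset.
Proof.
apply/andP; split.
  by rewrite inE; apply/pbP; exists (wOne A).
apply/subsetP => z /mulsgP [x y]; rewrite !inE => /pbP [w1 ->] /pbP [w2 ->] ->.
by apply/pbP; exists (wMul w1 w2).
Qed.
Definition Hgrp : {group P} := Group Hset_group.
Definition fS (a : A) : subg_of Hgrp := subg Hgrp (f a).

Lemma sgval_hom : grp_hom (@sgval _ Hgrp).
Proof.
split => [x y||x]; first exact: sgvalM.
  exact: (morph1 [morphism of @sgval P Hgrp]).
exact: (morphV [morphism of @sgval P Hgrp]).
Qed.

Lemma f_in a : f a \in Hgrp.
Proof. by rewrite inE; apply/pbP; exists (wGen a). Qed.

Lemma evS (w : OmegaG A) : om_val w f = sgval (om_val w fS).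
Proof.
rewrite (om_nat w sgval_hom fS); congr (om_val w _).
by apply: functional_extensionality => a; rewrite /fS subgK ?f_in.
Qed.

Lemma fS_surj (s : subg_of Hgrp) : exists w : word A, s = om_val (weval w) fS.
Proof.
have := subgP s; rewrite inE => /pbP [w e]; exists w.
by apply: subg_inj; rewrite -evS.
Qed.
End Surj.

Lemma surj_probe (A : finType) (P : finGroupType) (f : A -> P) :
  exists (S : finGroupType) (g : A -> S),
    (forall s, exists w : word A, s = om_val (weval w) g) /\
    (forall w w' : OmegaG A, om_val w g = om_val w' g -> om_val w f = om_val w' f).
Proof.
exists (subg_of (Hgrp f)), (fS f); split; first exact: fS_surj.
by move=> w w' e; rewrite (evS f w) (evS f w') e.
Qed.

Lemma density (A : finType) (L : list (probe A)) (w : OmegaG A) :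
  exists v : word A, agree L w (weval v).
Proof.
have [[P f] Hp] := combine L.
have [S [g [Hs Hg]]] := surj_probe f.
have [v ev] := Hs (om_val w g).
exists v; apply: Hp; exact: Hg.
Qed.

Lemma cont_hom_det (B : finType) (T : finGroupType) (psi : OmegaG B -> T) :
  omT_hom psi -> omT_cont psi ->
  forall w, psi w = om_val w (fun b => psi (gen b)).
Proof.
move=> hh hc w; have [L HL] := hc w.
have [v Hv] := density (Probe (fun b => psi (gen b)) :: L) w.
rewrite -(HL (weval v)); last by move=> p Lp; apply: Hv; right.
rewrite word_hom //; symmetry; exact: (Hv _ (or_introl erefl)).
Qed.
Definition subst (B A : finType) (g : B -> OmegaG A) (w : OmegaG B) : OmegaG A.
Proof.
refine (@MkOmegaG A (fun R h => om_val w (fun b => om_val (g b) h)) _).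
move=> T T' h hh f; rewrite (om_nat w hh); congr (om_val w _).
by apply: functional_extensionality => b; rewrite (om_nat (g b) hh).
Defined.

Lemma subst_hom (B A : finType) (g : B -> OmegaG A) : om_hom (subst g).
Proof. by split => [x y||x]; apply: om_ext. Qed.

Lemma subst_cont (B A : finType) (g : B -> OmegaG A) : om_cont (subst g).
Proof.
move=> w p; exists [:: Probe (fun b => ev (g b) p)] => w' H.
by have := H _ (or_introl erefl); rewrite /ev /= => ->.
Qed.

Section Main.
Variables (Sigma : pseudoid -> Prop) (A : finType).

Inductive tc : OmegaG A -> OmegaG A -> Prop :=
| tc_base x y : sigma0 Sigma x y -> tc x y
| tc_tr x y z : tc x y -> tc y z -> tc x z.

Lemma tc_refl x : tc x x.
Proof. by apply: tc_base; left. Qed.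

Lemma tc_mulr x y z : tc x y -> tc (om_mul x z) (om_mul y z).
Proof.
elim=> [{}x {}y [->|[B [u [v [phi [t [HS Hh Hc -> ->]]]]]]]|x1 y1 z1 _ H1 _ H2].
- exact: tc_refl.
- apply: tc_base; right; exists B, u, v, phi, (tMul t (tConst z)); by split.
- exact: tc_tr H1 H2.
Qed.

Lemma tc_mull x y z : tc x y -> tc (om_mul z x) (om_mul z y).
Proof.
elim=> [{}x {}y [->|[B [u [v [phi [t [HS Hh Hc -> ->]]]]]]]|x1 y1 z1 _ H1 _ H2].
- exact: tc_refl.
- apply: tc_base; right; exists B, u, v, phi, (tMul (tConst z) t); by split.
- exact: tc_tr H1 H2.
Qed.

Lemma tc_inv x y : tc x y -> tc (om_inv x) (om_inv y).
Proof.
elim=> [{}x {}y [->|[B [u [v [phi [t [HS Hh Hc -> ->]]]]]]]|x1 y1 z1 _ H1 _ H2].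
- exact: tc_refl.
- apply: tc_base; right; exists B, u, v, phi, (tInv t); by split.
- exact: tc_tr H1 H2.
Qed.

Lemma tc_mul x y x' y' : tc x y -> tc x' y' -> tc (om_mul x x') (om_mul y y').
Proof. move=> h h'; apply: tc_tr (tc_mulr x' h) (tc_mull y h'). Qed.

Lemma tc_sub (R : OmegaG A -> OmegaG A -> Prop) :
  (forall x y, sigma0 Sigma x y -> R x y) -> transitiveR R ->
  forall x y, tc x y -> R x y.
Proof. move=> H0 Htr x y; elim=> [{}x {}y|x1 y1 z1 _ H1 _ H2]; [exact: H0|exact: Htr H1 H2]. Qed.

Section Quot.
Variables (P : finGroupType) (f : A -> P).
Hypothesis fsurj : forall p : P, exists w : OmegaG A, p = om_val w f.

Definition Nset : {set P} :=
  [set p | pb (exists x y, [/\ tc x y, om_val x f = p & om_val y f = 1])].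

Lemma Nset_group : group_set Nset.
Proof.
apply/andP; split.
  rewrite inE; apply/pbP; exists (om_one A), (om_one A); split => //; exact: tc_refl.
apply/subsetP => z /mulsgP [p q]; rewrite !inE => /pbP [x [y [hxy hx hy]]].
move=> /pbP [x' [y' [hxy' hx' hy']]] ->; apply/pbP.
exists (om_mul x x'), (om_mul y y'); split; first exact: tc_mul.
  by rewrite /= hx hx'.
by rewrite /= hy hy' mulg1.
Qed.

Lemma N_conj p q : p \in Nset -> p ^ q \in Nset.
Proof.
have [w ->] := fsurj q.
rewrite !inE => /pbP [x [y [hxy hx hy]]]; apply/pbP.
exists (om_mul (om_inv w) (om_mul x w)), (om_mul (om_inv w) (om_mul y w)); split.
- apply: tc_mull; exact: tc_mulr.
- by rewrite /= hx conjgE.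
- by rewrite /= hy mul1g mulVg.
Qed.

Lemma norm_all q : q \in 'N(Nset).
Proof.
apply/normP/setP => y; rewrite mem_conjg; apply/idP/idP; last exact: N_conj.
by move=> /(N_conj q); rewrite conjgKV.
Qed.

Definition Ng : {group P} := Group Nset_group.
Definition T := coset_of Ng.
Definition pi (p : P) : T := coset Ng p.

Lemma pi_hom : grp_hom pi.
Proof.
split => [x y||x].
- by apply: coset_morphM; apply: norm_all.
- exact: (morph1 [morphism of coset Ng]).
- by apply: (morphV [morphism of coset Ng]); apply: norm_all.
Qed.

Lemma pi_eq p q : pi p = pi q -> p * q^-1 \in Ng.
Proof.
move=> e; apply: coset_idr; first exact: norm_all.
case: pi_hom => hM h1 hV; by rewrite -/(pi _) hM hV e mulgV.
Qed.

Lemma pi_tc x y : tc x y -> pi (om_val x f) = pi (om_val y f).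
Proof.
move=> h.
have hN : om_val x f * (om_val y f)^-1 \in Ng.
  rewrite inE; apply/pbP; exists (om_mul x (om_inv y)), (om_mul y (om_inv y)); split => //.
    by apply: tc_mulr.
  by rewrite /= mulgV.
have := coset_id hN; case: pi_hom => hM h1 hV.
rewrite -/(pi _) hM hV => e.
by rewrite -(mulgVK (pi (om_val y f)) (pi (om_val x f))) e mul1g.
Qed.

Lemma pi_surj (t : T) : exists w : OmegaG A, t = pi (om_val w f).
Proof. have [x _ ->] := cosetP t; have [w ->] := fsurj x; by exists w. Qed.

Lemma models_T : models T Sigma.
Proof.
move=> [B u0 v0] HS psi hh hc /=.
have hg : forall b : B, exists w : OmegaG A, psi (gen b) = pi (om_val w f).
  by move=> b; apply: pi_surj.
pose g b := proj1_sig (constructive_indefinite_description _ (hg b)).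
have gP b : psi (gen b) = pi (om_val (g b) f).
  exact: (proj2_sig (constructive_indefinite_description _ (hg b))).
have key w : pi (om_val (subst g w) f) = psi w.
  rewrite /= (om_nat w pi_hom) (cont_hom_det hh hc w); congr (om_val w _).
  by apply: functional_extensionality => b; rewrite gP.
rewrite -!key; apply: pi_tc; apply: tc_base; right.
exists B, u0, v0, (subst g), (tHole A); split.
- by left.
- exact: subst_hom.
- exact: subst_cont.
- by [].
- by [].
Qed.

Lemma main_step (u v : OmegaG A) :
  (forall T : finGroupType, models T Sigma -> holds_in T u v) ->
  exists x y, [/\ tc x y, om_val x f = om_val u f & om_val y f = om_val v f].
Proof.
move=> Hyp.
have e : pi (om_val u f) = pi (om_val v f).
  apply: (Hyp T models_T (fun w => pi (om_val w f))).
  - case: pi_hom => hM h1 hV; split => [x y||x] /=; by rewrite ?hM ?h1 ?hV.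
  - by move=> w; exists [:: Probe f] => w' H; have := H _ (or_introl erefl); rewrite /ev /= => ->.
have := pi_eq e; rewrite inE => /pbP [x [y [hxy hx hy]]].
exists (om_mul x v), (om_mul y v); split.
- exact: tc_mulr.
- by rewrite /= hx mulgVK.
- by rewrite /= hy mul1g.
Qed.
End Quot.
End Main.

Theorem corollary8p2 :
  forall (Sigma : pseudoid -> Prop) (A : finType) (u v : OmegaG A),
    (forall T : finGroupType, models T Sigma -> holds_in T u v) ->
    provable Sigma u v.
Proof.
move=> Sigma A u v Hyp R H0 Htr Hcl; apply: Hcl => L.
have [[P f] Hp] := combine L.
have [S [g [Hs Hg]]] := surj_probe f.
have gs : forall s : S, exists w : OmegaG A, s = om_val w g.
  by move=> s; have [w ->] := Hs s; exists (weval w).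
have [x [y [hxy hx hy]]] := main_step gs Hyp.
exists x, y; split.
- exact: (tc_sub H0 Htr hxy).
- apply: Hp; rewrite /ev /=; apply: Hg; by rewrite hx.
- apply: Hp; rewrite /ev /=; apply: Hg; by rewrite hy.
Qed.
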